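(* Let $\vec a\in\mathbb R^4\setminus\{0\}$, let $V\in\mathfrak X(\mathbb H^3)$ be the proper conformal vector field $V(p)=\vec a+\langle\vec a,p\rangle p$, let $q\neq0$, and let $\gamma\colon I\to\mathbb H^3$ be a curve parametrized by arc-length which is a conformal trajectory of $V$. Then there exist $a_1,a_2\in\mathbb R$ such that $$\langle\gamma(s),\vec a\rangle=a_1\cosh s+a_2\sinh s\quad\text{for all }s\in I.$$ If $\gamma$ is a geodesic, then $\gamma(s)=\cosh(s)\,\vec v+\sinh(s)\,\vec w$ with $\langle\vec v,\vec v\rangle=-1$, $\langle\vec w,\vec w\rangle=1$, $\langle\vec v,\vec w\rangle=0$ and $\vec a\in\operatorname{span}\{\vec v,\vec w\}$; that is, $\gamma$ is obtained by intersecting $\mathbb H^3$ with a Lorentzian (Minkowski) $2$-plane through the origin containing $\vec a$. If $\gamma$ is not a geodesic, then its curvature is constant with $\kappa^2=q^2\big(\langle\vec a,\vec a\rangle+a_1^2-a_2^2\big)$, and its torsion is $\tau(s)=q\,(a_1\sinh s+a_2\cosh s)$.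
   Context: $\mathbb R^4$ carries the Lorentzian metric $\langle\cdot,\cdot\rangle=dx^2+dy^2+dz^2-dt^2$ and $\mathbb H^3=\{p\in\mathbb R^4:\langle p,p\rangle=-1,\ t>0\}$ with the induced Riemannian metric; its Levi-Civita connection satisfies $\nabla_{\gamma'}\gamma'=\gamma''-\gamma$ for unit-speed curves. The cross product of $u,v\in T_p\mathbb H^3$ is the unique $u\times v\in T_p\mathbb H^3$ with $\langle u\times v,w\rangle=\det(u,v,w,p)$ for all $w\in T_p\mathbb H^3$. For a fixed real $q\neq0$, a conformal trajectory of $V$ is a regular curve with $\nabla_{\gamma'}\gamma'=q\,V\times\gamma'$. Frenet frame of a non-geodesic unit-speed curve: $T=\gamma'$, $\nabla_TT=\kappa N$ with $\kappa>0$, $B=T\times N$, $\nabla_TN=-\kappa T+\tau B$, $\nabla_TB=-\tau N$; $\kappa$ is the curvature, $\tau$ the torsion. *)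

(* Defs.v *)
From Stdlib Require Import Reals Lra.
From Coquelicot Require Import Coquelicot.
Open Scope R_scope.

(* R^4 with coordinates (x, y, z, t), as a Coquelicot normed module
   (nested products ((x, y), z), t). *)
Definition R4 : Type := (R * R * R * R)%type.
Definition mk4 (x y z t : R) : R4 := (x, y, z, t).
Definition c1 (u : R4) : R := fst (fst (fst u)).
Definition c2 (u : R4) : R := snd (fst (fst u)).
Definition c3 (u : R4) : R := snd (fst u).
Definition c4 (u : R4) : R := snd u.

Definition vadd (u v : R4) : R4 :=
  mk4 (c1 u + c1 v) (c2 u + c2 v) (c3 u + c3 v) (c4 u + c4 v).
Definition vscal (k : R) (u : R4) : R4 :=
  mk4 (k * c1 u) (k * c2 u) (k * c3 u) (k * c4 u).
Definition vsub (u v : R4) : R4 := vadd u (vscal (-1) v).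
Definition vzero : R4 := mk4 0 0 0 0.

Definition lor (u v : R4) : R :=
  c1 u * c1 v + c2 u * c2 v + c3 u * c3 v - c4 u * c4 v.

Definition inH3 (p : R4) : Prop := lor p p = -1 /\ 0 < c4 p.

Definition det3 (a1 a2 a3 b1 b2 b3 d1 d2 d3 : R) : R :=
  a1 * (b2 * d3 - b3 * d2) - a2 * (b1 * d3 - b3 * d1) + a3 * (b1 * d2 - b2 * d1).

Definition det4 (u v w p : R4) : R :=
    c1 u * det3 (c2 v) (c3 v) (c4 v) (c2 w) (c3 w) (c4 w) (c2 p) (c3 p) (c4 p)
  - c2 u * det3 (c1 v) (c3 v) (c4 v) (c1 w) (c3 w) (c4 w) (c1 p) (c3 p) (c4 p)
  + c3 u * det3 (c1 v) (c2 v) (c4 v) (c1 w) (c2 w) (c4 w) (c1 p) (c2 p) (c4 p)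
  - c4 u * det3 (c1 v) (c2 v) (c3 v) (c1 w) (c2 w) (c3 w) (c1 p) (c2 p) (c3 p).

Definition e1 : R4 := mk4 1 0 0 0.
Definition e2 : R4 := mk4 0 1 0 0.
Definition e3 : R4 := mk4 0 0 1 0.
Definition e4 : R4 := mk4 0 0 0 1.

(* Cross product in T_p H^3: the vector with <u x v, w> = det(u,v,w,p). *)
Definition cross (p u v : R4) : R4 :=
  mk4 (det4 u v e1 p) (det4 u v e2 p) (det4 u v e3 p) (- det4 u v e4 p).

Lemma cross_spec (p u v w : R4) : lor (cross p u v) w = det4 u v w p.
Proof.
  destruct u as [[[u1 u2] u3] u4]; destruct v as [[[v1 v2] v3] v4];
  destruct w as [[[w1 w2] w3] w4]; destruct p as [[[p1 p2] p3] p4].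
  unfold lor, cross, det4, det3, mk4, e1, e2, e3, e4, c1, c2, c3, c4; simpl; ring.
Qed.

Lemma cross_tangent (p u v : R4) : lor (cross p u v) p = 0.
Proof.
  destruct u as [[[u1 u2] u3] u4]; destruct v as [[[v1 v2] v3] v4];
  destruct p as [[[p1 p2] p3] p4].
  unfold lor, cross, det4, det3, mk4, e1, e2, e3, e4, c1, c2, c3, c4; simpl; ring.
Qed.

Definition Vfield (a p : R4) : R4 := vadd a (vscal (lor a p) p).

(* Tangential projection onto T_p H^3 (normal direction is p, <p,p> = -1);
   the covariant derivative along gamma of a tangent field X is
   proj (gamma s) (X'(s)). *)
Definition proj (p Y : R4) : R4 := vadd Y (vscal (lor Y p) p).

Definition in_I (lo hi : Rbar) (s : R) : Prop := Rbar_lt lo s /\ Rbar_lt s hi.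

(* Main.v *)
Require Import Defs.
From Stdlib Require Import Reals Lra.
From Coquelicot Require Import Coquelicot.
Open Scope R_scope.


Lemma der_fst {U V : NormedModule R_AbsRing} (f : R -> U * V) x l :
  is_derive f x l -> is_derive (fun t => fst (f t)) x (fst l).
Proof.
  intros H. unfold is_derive in *.
  apply (filterdiff_comp' f (fun t => fst t) x _ (fun t => fst t) H).
  apply filterdiff_linear, is_linear_fst.
Qed.
Lemma der_snd {U V : NormedModule R_AbsRing} (f : R -> U * V) x l :
  is_derive f x l -> is_derive (fun t => snd (f t)) x (snd l).
Proof.
  intros H. unfold is_derive in *.
  apply (filterdiff_comp' f (fun t => snd t) x _ (fun t => snd t) H).
  apply filterdiff_linear, is_linear_snd.
Qed.
Lemma der_pair {U V : NormedModule R_AbsRing} (f : R -> U) (g : R -> V) x l m :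
  is_derive f x l -> is_derive g x m -> is_derive (fun t => (f t, g t)) x (l, m).
Proof.
  intros Hf Hg. unfold is_derive in *.
  apply (filterdiff_comp'_2 f g (fun u v => (u, v)) x _ _ (fun u v => (u, v)) Hf Hg).
  apply filterdiff_linear. 
  apply (is_linear_ext (fun t => t)). intros [a b]; reflexivity.
  apply is_linear_id.
Qed.

Lemma inI_conv lo hi x y z : in_I lo hi x -> in_I lo hi y -> x <= z <= y -> in_I lo hi z.
Proof.
  intros [Hx1 Hx2] [Hy1 Hy2] [H1 H2]; split.
  - apply (Rbar_lt_le_trans lo (Finite x) (Finite z)); auto.
  - apply (Rbar_le_lt_trans (Finite z) (Finite y) hi); auto.
Qed.

Lemma const_I lo hi (h : R -> R) :
  (forall t, in_I lo hi t -> is_derive h t 0) ->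
  forall x y, in_I lo hi x -> in_I lo hi y -> h x = h y.
Proof.
  intros Hd x y Hx Hy.
  assert (Hin : forall z, Rmin x y <= z <= Rmax x y -> in_I lo hi z).
  { intros z Hz. unfold Rmin, Rmax in Hz. destruct (Rle_dec x y).
    - apply (inI_conv lo hi x y z); auto.
    - apply (inI_conv lo hi y x z); auto; lra. }
  destruct (MVT_gen h x y (fun _ => 0)) as [c [_ Hc]].
  - intros z Hz. apply Hd, Hin; lra.
  - intros z Hz. apply continuity_pt_filterlim. apply (ex_derive_continuous (V:=R_NormedModule)).
    exists 0. apply Hd, Hin; auto.
  - lra.
Qed.

Lemma ode lo hi (g g1 : R -> R) s0 : in_I lo hi s0 ->
  (forall t, in_I lo hi t -> is_derive g t (g1 t)) ->
  (forall t, in_I lo hi t -> is_derive g1 t (g t)) ->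
  g s0 = 0 -> g1 s0 = 0 -> forall t, in_I lo hi t -> g t = 0 /\ g1 t = 0.
Proof.
  intros Hs0 H1 H2 E0 E1.
  assert (A : forall t, in_I lo hi t -> g1 t = - g t).
  { intros t Ht.
    assert (C := const_I lo hi (fun t => (g1 t + g t) * exp (-t))).
    specialize (C ltac:(intros u Hu; auto_derive; [split; [exists (g u); auto|split; [exists (g1 u); auto| auto]] |
      replace (Derive (fun x => g1 x) u) with (g u) by (symmetry; apply is_derive_unique; auto);
      replace (Derive (fun x => g x) u) with (g1 u) by (symmetry; apply is_derive_unique; auto); ring]) t s0 Ht Hs0).
    simpl in C. rewrite E0, E1 in C.
    assert (exp (-t) > 0) by apply exp_pos. nra. }
  intros t Ht.
  assert (C := const_I lo hi (fun t => g t * exp t)).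
  specialize (C ltac:(intros u Hu; auto_derive; [exists (g1 u); auto |
      replace (Derive (fun x => g x) u) with (g1 u) by (symmetry; apply is_derive_unique; auto);
      rewrite (A u Hu); ring])).
  specialize (C t s0 Ht Hs0).
  simpl in C. rewrite E0 in C.
  assert (exp t > 0) by apply exp_pos.
  assert (g t = 0) by nra. split; auto. rewrite (A t Ht); lra.
Qed.

Ltac d4 := repeat match goal with v : R4 |- _ => destruct v as [[[? ?] ?] ?] end.
Ltac prs := match goal with |- @eq _ (pair _ _) (pair _ _) => apply injective_projections; simpl; prs | _ => ring end.
Ltac vr := d4; unfold vsub, vadd, vscal, vzero, cross, det4, det3, lor, Vfield, e1, e2, e3, e4, mk4, Defs.c1, Defs.c2, Defs.c3, Defs.c4; simpl; prs.

Lemma cross_scal p x y k : cross p x (vscal k y) = vscal k (cross p x y). Proof. vr. Qed.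
Lemma cross_sub p x A : cross p x (vsub A p) = cross p x A. Proof. vr. Qed.
Lemma cross_rep p u : cross p u p = vzero. Proof. vr. Qed.
Lemma cross_rep2 p u : cross u p u = vzero. Proof. vr. Qed.
Lemma cross_pp p u al be : cross p (vadd (vscal al p) (vscal be u)) u = vzero. Proof. vr. Qed.
Lemma cc p x y z : cross p x (cross p y z) =
  vscal (-1) (vadd (vadd (vscal (lor x z * lor p p - lor x p * lor p z) y)
       (vscal (-(lor x y * lor p p - lor x p * lor p y)) z))
       (vscal (lor x y * lor p z - lor x z * lor p y) p)).
Proof. vr. Qed.
Lemma cg p u v : lor (cross p u v) (cross p u v) =
  - (lor u u * (lor v v * lor p p - lor v p * lor p v)
     - lor u v * (lor v u * lor p p - lor v p * lor p u)
     + lor u p * (lor v u * lor p v - lor v v * lor p u)).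
Proof. vr. Qed.

Lemma der_c (G : R -> R4) s L : is_derive G s L ->
  is_derive (fun t => Defs.c1 (G t)) s (Defs.c1 L) /\ is_derive (fun t => Defs.c2 (G t)) s (Defs.c2 L) /\
  is_derive (fun t => Defs.c3 (G t)) s (Defs.c3 L) /\ is_derive (fun t => Defs.c4 (G t)) s (Defs.c4 L).
Proof.
  intros H. unfold Defs.c1, Defs.c2, Defs.c3, Defs.c4.
  pose proof (der_fst _ _ _ H) as H1. pose proof (der_snd _ _ _ H) as H4.
  pose proof (der_fst _ _ _ H1) as H2. pose proof (der_snd _ _ _ H1) as H3.
  pose proof (der_fst _ _ _ H2) as H5. pose proof (der_snd _ _ _ H2) as H6.
  simpl in *. split; [exact H5|split; [exact H6|split; [exact H3|exact H4]]].
Qed.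

Lemma der_mk (g1 g2 g3 g4 : R -> R) s d1 d2 d3 d4 :
  is_derive g1 s d1 -> is_derive g2 s d2 -> is_derive g3 s d3 -> is_derive g4 s d4 ->
  is_derive (fun t => mk4 (g1 t) (g2 t) (g3 t) (g4 t)) s (mk4 d1 d2 d3 d4).
Proof.
  intros. unfold mk4. repeat apply der_pair; assumption.
Qed.

Lemma eta4 (u : R4) : u = mk4 (Defs.c1 u) (Defs.c2 u) (Defs.c3 u) (Defs.c4 u).
Proof. destruct u as [[[? ?] ?] ?]; reflexivity. Qed.

Lemma der_uniq4 (G : R -> R4) s L1 L2 : is_derive G s L1 -> is_derive G s L2 -> L1 = L2.
Proof.
  intros H1 H2. apply der_c in H1. apply der_c in H2.
  destruct H1 as (A1 & A2 & A3 & A4). destruct H2 as (B1 & B2 & B3 & B4).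
  rewrite (eta4 L1), (eta4 L2).
  rewrite <- (is_derive_unique _ _ _ A1), <- (is_derive_unique _ _ _ B1).
  rewrite <- (is_derive_unique _ _ _ A2), <- (is_derive_unique _ _ _ B2).
  rewrite <- (is_derive_unique _ _ _ A3), <- (is_derive_unique _ _ _ B3).
  rewrite <- (is_derive_unique _ _ _ A4), <- (is_derive_unique _ _ _ B4).
  reflexivity.
Qed.

Lemma locI lo hi s : in_I lo hi s -> locally s (in_I lo hi).
Proof.
  intros Hs. apply (locally_open (in_I lo hi)); auto.
  apply open_and; [apply open_Rbar_gt | apply open_Rbar_lt].
Qed.
Ltac solve_ex := repeat (first [ split | exact I | (eexists; eassumption) ]).
Ltac rw_der := repeat match goal with
  | H : is_derive ?g ?s ?v |- context [Derive (fun x => ?g x) ?s] =>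
      replace (Derive (fun x => g x) s) with v by (symmetry; apply is_derive_unique; exact H)
  end.

Lemma der_cross (a : R4) q (g1 g2 g3 g4 h1 h2 h3 h4 : R -> R) k1 k2 k3 k4 s :
  is_derive g1 s (h1 s) -> is_derive g2 s (h2 s) -> is_derive g3 s (h3 s) -> is_derive g4 s (h4 s) ->
  is_derive h1 s k1 -> is_derive h2 s k2 -> is_derive h3 s k3 -> is_derive h4 s k4 ->
  let G := fun t => mk4 (g1 t) (g2 t) (g3 t) (g4 t) in
  let Hh := fun t => mk4 (h1 t) (h2 t) (h3 t) (h4 t) in
  let K := mk4 k1 k2 k3 k4 in
  is_derive (fun t => vscal q (cross (G t) (Vfield a (G t)) (Hh t))) s
    (vscal q (vadd (vadd (cross (Hh s) (Vfield a (G s)) (Hh s))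
       (cross (G s) (vadd (vscal (lor a (Hh s)) (G s)) (vscal (lor a (G s)) (Hh s))) (Hh s)))
       (cross (G s) (Vfield a (G s)) K))).
Proof.
  intros D1 D2 D3 D4 E1 E2 E3 E4 G Hh K.
  destruct a as [[[a1 a2] a3] a4].
  cbv beta iota delta [G Hh K vsub vadd vscal vzero cross det4 det3 lor Vfield e1 e2 e3 e4 mk4 Defs.c1 Defs.c2 Defs.c3 Defs.c4 fst snd].
  repeat apply der_pair. all: try (auto_derive; [solve_ex | rw_der; ring]).
Qed.

Lemma der_lin4 (g1 g2 g3 g4 : R -> R) d1 d2 d3 d4 b1 b2 b3 b4 s :
  is_derive g1 s d1 -> is_derive g2 s d2 -> is_derive g3 s d3 -> is_derive g4 s d4 ->
  is_derive (fun t => g1 t * b1 + g2 t * b2 + g3 t * b3 - g4 t * b4) s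
    (d1 * b1 + d2 * b2 + d3 * b3 - d4 * b4).
Proof. intros. auto_derive; [solve_ex | rw_der; ring]. Qed.

Lemma der_lor (G : R -> R4) a s L : is_derive G s L ->
  is_derive (fun t => lor (G t) a) s (lor L a).
Proof.
  intros H. destruct (der_c G s L H) as (A1 & A2 & A3 & A4).
  unfold lor. exact (der_lin4 _ _ _ _ _ _ _ _ _ _ _ _ s A1 A2 A3 A4).
Qed.

Lemma der_lin2 (g h : R -> R) d e k s :
  is_derive g s d -> is_derive h s e ->
  is_derive (fun t => k * (g t + -1 * h t)) s (k * (d + -1 * e)).
Proof. intros. auto_derive; [solve_ex | rw_der; ring]. Qed.

Lemma der_vsv (G H : R -> R4) k s L M : is_derive G s L -> is_derive H s M ->
  is_derive (fun t => vscal k (vsub (G t) (H t))) s (vscal k (vsub L M)).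
Proof.
  intros HG HH. destruct (der_c G s L HG) as (A1 & A2 & A3 & A4).
  destruct (der_c H s M HH) as (B1 & B2 & B3 & B4).
  exact (der_mk _ _ _ _ s _ _ _ _ (der_lin2 _ _ _ _ k s A1 B1) (der_lin2 _ _ _ _ k s A2 B2)
     (der_lin2 _ _ _ _ k s A3 B3) (der_lin2 _ _ _ _ k s A4 B4)).
Qed.

Ltac unf := cbv beta iota delta [vsub vadd vscal vzero cross det4 det3 lor Vfield proj e1 e2 e3 e4 mk4 Defs.c1 Defs.c2 Defs.c3 Defs.c4 fst snd].
Ltac unfa := cbv beta iota delta [vsub vadd vscal vzero cross det4 det3 lor Vfield proj e1 e2 e3 e4 mk4 Defs.c1 Defs.c2 Defs.c3 Defs.c4 fst snd] in *.
Ltac vr2 := d4; unf; prs.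

Lemma lor_sym u v : lor u v = lor v u. Proof. vr2. Qed.
Lemma lor_scal_l k u v : lor (vscal k u) v = k * lor u v. Proof. vr2. Qed.
Lemma lor_traj p a q T : lor (vadd p (vscal q (cross p (Vfield a p) T))) a = lor p a. Proof. vr2. Qed.
Lemma vsub_vadd A p : A = vadd p (vsub A p). Proof. vr2. Qed.
Lemma lor_Vp a p : lor (Vfield a p) p = lor a p * (1 + lor p p). Proof. vr2. Qed.
Lemma lor_VT a p T : lor (Vfield a p) T = lor a T + lor a p * lor p T. Proof. vr2. Qed.
Lemma lor_VV a p : lor (Vfield a p) (Vfield a p) =
  lor a a + 2 * lor a p * lor a p + lor a p * lor a p * lor p p. Proof. vr2. Qed.
Lemma lor_bil x y u w x' y' : lor (vadd (vscal x u) (vscal y w)) (vadd (vscal x' u) (vscal y' w)) =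
  x*x'*lor u u + x*y'*lor u w + y*x'*lor w u + y*y'*lor w w. Proof. vr2. Qed.
Lemma lor_ss k C : lor (vscal k C) (vscal k C) = k*k*lor C C. Proof. vr2. Qed.
Lemma vscal1 X : vscal 1 X = X. Proof. vr2. Qed.
Lemma Dsimp q X : vscal q (vadd (vadd vzero vzero) (vscal q X)) = vscal (q*q) X. Proof. vr2. Qed.
Lemma vscal_scal x y X : vscal x (vscal y X) = vscal (x*y) X. Proof. vr2. Qed.
Lemma proj_tan Y p : lor Y p = 0 -> proj p Y = Y.
Proof. intros H. unfold proj. rewrite H. vr2. Qed.
Lemma vdecomp X l T : X = vadd (vscal l T) (vsub X (vscal l T)). Proof. vr2. Qed.
Lemma lor_U1 X l T p : lor (vsub X (vscal l T)) p = lor X p - l * lor T p. Proof. vr2. Qed.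
Lemma lor_U2 X l T : lor (vsub X (vscal l T)) (vsub X (vscal l T)) =
  lor X X - 2 * l * lor X T + l * l * lor T T. Proof. vr2. Qed.
Lemma vscal_zero q X : q <> 0 -> vscal q X = vzero -> X = vzero.
Proof.
  intros Hq H. d4. unfa.
  injection H; intros. repeat f_equal;
  match goal with E : q * ?x = 0 |- ?x = 0 => apply Rmult_integral in E; destruct E; [contradiction|auto] end.
Qed.
Lemma vsub_zero A p : vsub A p = vzero -> A = p.
Proof. intros H. rewrite (vsub_vadd A p), H. vr2. Qed.

Lemma spacelike U p : lor U p = 0 -> lor p p = -1 -> 0 <= lor U U /\ (lor U U = 0 -> U = vzero).
Proof.
  intros H1 H2. d4. unfa.
  rename r into p1, r0 into p2, r1 into p3, r2 into p4, r3 into u1, r4 into u2, r5 into u3, r6 into u4.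
  assert (L : (u1*u1+u2*u2+u3*u3)*(p1*p1+p2*p2+p3*p3) - (u1*p1+u2*p2+u3*p3)^2
     = (u1*p2-u2*p1)^2 + (u1*p3-u3*p1)^2 + (u2*p3-u3*p2)^2) by ring.
  assert (S : u1*p1+u2*p2+u3*p3 = u4*p4) by lra.
  assert (P : p1*p1+p2*p2+p3*p3 = p4*p4 - 1) by lra.
  rewrite S, P in L.
  assert (Sq : 0 <= (u1*p2-u2*p1)^2 + (u1*p3-u3*p1)^2 + (u2*p3-u3*p2)^2)
    by (repeat apply Rplus_le_le_0_compat; apply pow2_ge_0).
  assert (Q : (u1*u1+u2*u2+u3*u3) * (p4*p4 - 1) >= (u4*p4)^2) by lra.
  assert (Hp : p4 * p4 >= 1) by nra.
  assert (M : p4*p4 * ((u1*u1+u2*u2+u3*u3) - u4*u4) >= u1*u1+u2*u2+u3*u3) by nra.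
  split.
  - nra.
  - intros Z. assert (u1*u1+u2*u2+u3*u3 <= 0) by nra.
    assert (u1 = 0) by nra. assert (u2 = 0) by nra. assert (u3 = 0) by nra.
    assert (u4 = 0) by nra. subst. reflexivity.
Qed.

Lemma ch_sh x : cosh x * cosh x - sinh x * sinh x = 1.
Proof.
  unfold cosh, sinh. rewrite exp_Ropp. field. apply Rgt_not_eq, exp_pos.
Qed.

Lemma der_hyp (f : R -> R) t d A B : is_derive f t d ->
  is_derive (fun t => f t - (A * cosh t + B * sinh t)) t (d - (A * sinh t + B * cosh t)).
Proof. intros. unfold cosh, sinh. auto_derive; [solve_ex | rw_der; field]. Qed.
Lemma der_hyp2 (f : R -> R) t d A B : is_derive f t d ->
  is_derive (fun t => f t - (A * sinh t + B * cosh t)) t (d - (A * cosh t + B * sinh t)).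
Proof. intros. unfold cosh, sinh. auto_derive; [solve_ex | rw_der; field]. Qed.

Lemma sol lo hi (x x1 : R -> R) s0 : in_I lo hi s0 ->
  (forall t, in_I lo hi t -> is_derive x t (x1 t)) ->
  (forall t, in_I lo hi t -> is_derive x1 t (x t)) ->
  forall t, in_I lo hi t ->
    x t = (cosh s0 * x s0 - sinh s0 * x1 s0) * cosh t + (cosh s0 * x1 s0 - sinh s0 * x s0) * sinh t /\
    x1 t = (cosh s0 * x s0 - sinh s0 * x1 s0) * sinh t + (cosh s0 * x1 s0 - sinh s0 * x s0) * cosh t.
Proof.
  intros Hs0 H1 H2 t Ht.
  set (A := cosh s0 * x s0 - sinh s0 * x1 s0).
  set (B := cosh s0 * x1 s0 - sinh s0 * x s0).
  destruct (ode lo hi (fun t => x t - (A * cosh t + B * sinh t))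
     (fun t => x1 t - (A * sinh t + B * cosh t)) s0 Hs0) with (t := t) as [E1 E2]; auto.
  - intros u Hu. apply der_hyp, H1, Hu.
  - intros u Hu. apply der_hyp2, H2, Hu.
  - unfold A, B. pose proof (ch_sh s0). simpl.
    replace (x s0) with (x s0 * (cosh s0 * cosh s0 - sinh s0 * sinh s0)) at 1 by (rewrite H; ring). ring.
  - unfold A, B. pose proof (ch_sh s0). simpl.
    replace (x1 s0) with (x1 s0 * (cosh s0 * cosh s0 - sinh s0 * sinh s0)) at 1 by (rewrite H; ring). ring.
  - simpl in E1, E2. split; lra.
Qed.

Lemma exI lo hi : Rbar_lt lo hi -> exists s, in_I lo hi s.
Proof.
  intros H. unfold in_I.
  destruct lo as [l| |]; destruct hi as [h| |]; simpl in *; try contradiction.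
  - exists ((l + h) / 2); simpl; split; lra.
  - exists (l + 1); simpl; split; auto; lra.
  - exists (h - 1); simpl; split; auto; lra.
  - exists 0; simpl; auto.
Qed.

Lemma der_sq4 (g1 g2 g3 g4 : R -> R) d1 d2 d3 d4 s :
  is_derive g1 s d1 -> is_derive g2 s d2 -> is_derive g3 s d3 -> is_derive g4 s d4 ->
  is_derive (fun t => g1 t * g1 t + g2 t * g2 t + g3 t * g3 t - g4 t * g4 t) s
    (2 * (g1 s * d1 + g2 s * d2 + g3 s * d3 - g4 s * d4)).
Proof. intros. auto_derive; [solve_ex | rw_der; ring]. Qed.

Lemma der_lorGG (G : R -> R4) s L : is_derive G s L ->
  is_derive (fun t => lor (G t) (G t)) s (2 * lor (G s) L).
Proof.
  intros H. destruct (der_c G s L H) as (A1 & A2 & A3 & A4).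
  unfold lor. exact (der_sq4 _ _ _ _ _ _ _ _ s A1 A2 A3 A4).
Qed.

Lemma orth_of_const lo hi (G G1 : R -> R4) c :
  (forall t, in_I lo hi t -> is_derive G t (G1 t)) ->
  (forall t, in_I lo hi t -> lor (G t) (G t) = c) ->
  forall t, in_I lo hi t -> lor (G t) (G1 t) = 0.
Proof.
  intros HD HC t Ht.
  assert (E : is_derive (fun u => lor (G u) (G u)) t 0).
  { apply (is_derive_ext_loc (fun _ => c)).
    - apply (filter_imp (in_I lo hi)); [|apply locI, Ht]. intros u Hu. symmetry; auto.
    - apply (is_derive_const (K:=R_AbsRing) (V:=R_NormedModule) c t). }
  pose proof (der_lorGG G t _ (HD t Ht)) as E2.
  apply is_derive_unique in E. apply is_derive_unique in E2. rewrite E in E2. lra.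
Qed.

Lemma geo_sol lo hi (gamma gamma1 : R -> R4) s0 : in_I lo hi s0 ->
  (forall t, in_I lo hi t -> is_derive gamma t (gamma1 t)) ->
  (forall t, in_I lo hi t -> is_derive gamma1 t (gamma t)) ->
  forall t, in_I lo hi t -> gamma t =
    vadd (vscal (cosh t) (vadd (vscal (cosh s0) (gamma s0)) (vscal (- sinh s0) (gamma1 s0))))
         (vscal (sinh t) (vadd (vscal (- sinh s0) (gamma s0)) (vscal (cosh s0) (gamma1 s0)))).
Proof.
  intros Hs0 H1 H2 t Ht.
  assert (D1 := fun u Hu => der_c _ _ _ (H1 u Hu)).
  assert (D2 := fun u Hu => der_c _ _ _ (H2 u Hu)).
  destruct (sol lo hi (fun t => Defs.c1 (gamma t)) (fun t => Defs.c1 (gamma1 t)) s0 Hs0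
    (fun u Hu => proj1 (D1 u Hu)) (fun u Hu => proj1 (D2 u Hu)) t Ht) as [E1 _].
  destruct (sol lo hi (fun t => Defs.c2 (gamma t)) (fun t => Defs.c2 (gamma1 t)) s0 Hs0
    (fun u Hu => proj1 (proj2 (D1 u Hu))) (fun u Hu => proj1 (proj2 (D2 u Hu))) t Ht) as [E2 _].
  destruct (sol lo hi (fun t => Defs.c3 (gamma t)) (fun t => Defs.c3 (gamma1 t)) s0 Hs0
    (fun u Hu => proj1 (proj2 (proj2 (D1 u Hu)))) (fun u Hu => proj1 (proj2 (proj2 (D2 u Hu)))) t Ht) as [E3 _].
  destruct (sol lo hi (fun t => Defs.c4 (gamma t)) (fun t => Defs.c4 (gamma1 t)) s0 Hs0
    (fun u Hu => proj2 (proj2 (proj2 (D1 u Hu)))) (fun u Hu => proj2 (proj2 (proj2 (D2 u Hu)))) t Ht) as [E4 _].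
  simpl in E1, E2, E3, E4.
  rewrite (eta4 (gamma t)). rewrite E1, E2, E3, E4.
  unf. prs.
Qed.

Lemma sc lam F c sh u v : c*c - sh*sh = 1 ->
  lam * v + 0 + -1 * (F * u) = (lam * sh - F * c) * (c * u + - sh * v) + (lam * c - F * sh) * (- sh * u + c * v).
Proof. intros H. transitivity ((lam*v - F*u)*(c*c-sh*sh)); [rewrite H; ring | ring]. Qed.

Lemma span_final a p T lam c sh : c*c - sh*sh = 1 -> Vfield a p = vadd (vscal lam T) vzero ->
  a = vadd (vscal (lam*sh - lor a p * c) (vadd (vscal c p) (vscal (-sh) T)))
           (vscal (lam*c - lor a p*sh) (vadd (vscal (-sh) p) (vscal c T))).
Proof.
  intros Hc HV.
  assert (Ha : a = vsub (Vfield a p) (vscal (lor a p) p)) by vr2.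
  rewrite HV in Ha. set (F := lor a p) in *. clearbody F.
  rewrite Ha at 1. clear Ha HV. d4. unf.
  repeat (apply injective_projections; simpl). all: apply sc; exact Hc.
Qed.

Theorem theorem3
  (a : R4) (q : R) (lo hi : Rbar)
  (gamma gamma1 gamma2 gamma3 : R -> R4)
  (Ha : a <> vzero) (Hq : q <> 0) (HI : Rbar_lt lo hi)
  (* gamma is (three times) differentiable on I, with derivatives gamma1, gamma2, gamma3 *)
  (Hd1 : forall s, in_I lo hi s -> is_derive gamma s (gamma1 s))
  (Hd2 : forall s, in_I lo hi s -> is_derive gamma1 s (gamma2 s))
  (Hd3 : forall s, in_I lo hi s -> is_derive gamma2 s (gamma3 s))
  (* gamma takes values in H^3 and is parametrized by arc length *)
  (HH3 : forall s, in_I lo hi s -> inH3 (gamma s))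
  (Hunit : forall s, in_I lo hi s -> lor (gamma1 s) (gamma1 s) = 1)
  (* conformal trajectory of V: nabla_{gamma'} gamma' = gamma'' - gamma = q V x gamma' *)
  (Htraj : forall s, in_I lo hi s ->
     vsub (gamma2 s) (gamma s) = vscal q (cross (gamma s) (Vfield a (gamma s)) (gamma1 s))) :
  exists a1 a2 : R,
    (forall s, in_I lo hi s -> lor (gamma s) a = a1 * cosh s + a2 * sinh s)
    /\
    ((* geodesic case *)
     (forall s, in_I lo hi s -> vsub (gamma2 s) (gamma s) = vzero) ->
     exists v w : R4,
       lor v v = -1 /\ lor w w = 1 /\ lor v w = 0 /\
       (exists l1 l2 : R, a = vadd (vscal l1 v) (vscal l2 w)) /\
       (forall s, in_I lo hi s -> gamma s = vadd (vscal (cosh s) v) (vscal (sinh s) w)))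
    /\
    ((* non-geodesic case: Frenet frame T = gamma', N = (nabla_T T)/kappa, B = T x N *)
     (exists s0, in_I lo hi s0 /\ vsub (gamma2 s0) (gamma s0) <> vzero) ->
     let kappa := fun s => sqrt (lor (vsub (gamma2 s) (gamma s)) (vsub (gamma2 s) (gamma s))) in
     let N := fun s => vscal (/ kappa s) (vsub (gamma2 s) (gamma s)) in
     let B := fun s => cross (gamma s) (gamma1 s) (N s) in
     forall s, in_I lo hi s ->
       kappa s ^ 2 = q ^ 2 * (lor a a + a1 ^ 2 - a2 ^ 2) /\
       exists dN : R4, is_derive N s dN /\
         proj (gamma s) dN =
         vadd (vscal (- kappa s) (gamma1 s))
              (vscal (q * (a1 * sinh s + a2 * cosh s)) (B s))).
Proof.
  destruct (exI lo hi HI) as [s0 Hs0].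
  assert (Hpp : forall t, in_I lo hi t -> lor (gamma t) (gamma t) = -1) by (intros t Ht; apply HH3, Ht).
  assert (Hg2 : forall t, in_I lo hi t ->
    gamma2 t = vadd (gamma t) (vscal q (cross (gamma t) (Vfield a (gamma t)) (gamma1 t)))).
  { intros t Ht. rewrite <- Htraj by exact Ht. apply vsub_vadd. }
  assert (HpT : forall t, in_I lo hi t -> lor (gamma t) (gamma1 t) = 0)
    by (apply (orth_of_const lo hi gamma gamma1 (-1)); auto).
  set (f := fun t => lor (gamma t) a).
  set (f1 := fun t => lor (gamma1 t) a).
  assert (Hf : forall t, in_I lo hi t -> is_derive f t (f1 t)) by (intros t Ht; apply der_lor, Hd1, Ht).
  assert (Hf1 : forall t, in_I lo hi t -> is_derive f1 t (f t)).
  { intros t Ht. unfold f. rewrite <- (lor_traj (gamma t) a q (gamma1 t)), <- Hg2 by exact Ht.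
    apply der_lor, Hd2, Ht. }
  pose proof (sol lo hi f f1 s0 Hs0 Hf Hf1) as Hsol.
  set (a1 := cosh s0 * f s0 - sinh s0 * f1 s0) in Hsol.
  set (a2 := cosh s0 * f1 s0 - sinh s0 * f s0) in Hsol.
  exists a1, a2. split; [|split].
  - intros s Hs. apply (Hsol s Hs).
  - intros Hgeo.
    pose proof (ch_sh s0) as Hcs.
    exists (vadd (vscal (cosh s0) (gamma s0)) (vscal (- sinh s0) (gamma1 s0))),
           (vadd (vscal (- sinh s0) (gamma s0)) (vscal (cosh s0) (gamma1 s0))).
    pose proof (Hpp s0 Hs0) as P1. pose proof (Hunit s0 Hs0) as P2. pose proof (HpT s0 Hs0) as P3.
    assert (P4 : lor (gamma1 s0) (gamma s0) = 0) by (rewrite lor_sym; exact P3).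
    split; [|split; [|split; [|split]]].
    + rewrite lor_bil, P1, P2, P3, P4. nra.
    + rewrite lor_bil, P1, P2, P3, P4. nra.
    + rewrite lor_bil, P1, P2, P3, P4. nra.
    + assert (HC : cross (gamma s0) (Vfield a (gamma s0)) (gamma1 s0) = vzero).
      { apply (vscal_zero q); auto. rewrite <- (Htraj s0 Hs0). apply Hgeo, Hs0. }
      set (p0 := gamma s0) in *. set (T0 := gamma1 s0) in *.
      set (V := Vfield a p0) in *.
      assert (Vp : lor V p0 = 0) by (unfold V; rewrite lor_Vp, P1; ring).
      assert (pV : lor p0 V = 0) by (rewrite lor_sym; exact Vp).
      set (lam := lor V T0).
      assert (TV : lor T0 V = lam) by (apply lor_sym).
      pose proof (cg p0 V T0) as G. rewrite HC in G.
      replace (lor vzero vzero) with 0 in G by (unf; ring).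
      fold lam in G. rewrite P1, P2, P3, P4, Vp, pV, TV in G.
      assert (HU : vsub V (vscal lam T0) = vzero).
      { destruct (spacelike (vsub V (vscal lam T0)) p0) as [_ Z].
        - rewrite lor_U1, Vp, P4; ring.
        - exact P1.
        - apply Z. rewrite lor_U2, P2. fold lam. nra. }
      eexists; eexists. apply span_final; [exact Hcs|].
      fold V. rewrite <- HU. apply vdecomp.
    + apply (geo_sol lo hi gamma gamma1 s0 Hs0 Hd1).
      intros t Ht. rewrite <- (vsub_zero _ _ (Hgeo t Ht)). apply Hd2, Ht.
  - intros [s1 [Hs1 HK1]] kappa N B s Hs.
    set (C0 := q ^ 2 * (lor a a + a1 ^ 2 - a2 ^ 2)).
    assert (KK : forall t, in_I lo hi t ->
      lor (vsub (gamma2 t) (gamma t)) (vsub (gamma2 t) (gamma t)) = C0 /\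
      lor (vsub (gamma2 t) (gamma t)) (gamma t) = 0).
    { intros t Ht. rewrite (Htraj t Ht). split.
      2: { rewrite lor_scal_l, cross_tangent. ring. }
      rewrite lor_ss, cg.
      pose proof (Hpp t Ht) as P1. pose proof (Hunit t Ht) as P2. pose proof (HpT t Ht) as P3.
      assert (P4 : lor (gamma1 t) (gamma t) = 0) by (rewrite lor_sym; exact P3).
      assert (Vp : lor (Vfield a (gamma t)) (gamma t) = 0) by (rewrite lor_Vp, P1; ring).
      assert (pV : lor (gamma t) (Vfield a (gamma t)) = 0) by (rewrite lor_sym; exact Vp).
      assert (TV : lor (gamma1 t) (Vfield a (gamma t)) = lor (Vfield a (gamma t)) (gamma1 t)) by apply lor_sym.
      rewrite TV, P1, P2, P3, P4, Vp, pV.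
      rewrite lor_VV, lor_VT, P1, P3.
      destruct (Hsol t Ht) as [F1 F2]. unfold f, f1 in F1, F2.
      rewrite (lor_sym a (gamma t)), (lor_sym a (gamma1 t)), F1, F2.
      pose proof (ch_sh t). unfold C0. nra. }
    assert (C0pos : 0 < C0).
    { destruct (KK s1 Hs1) as [E1 E2].
      destruct (spacelike _ _ E2 (Hpp s1 Hs1)) as [Z1 Z2].
      destruct (Rle_lt_or_eq_dec 0 C0) as [h|h]; [lra|exact h|].
      exfalso. apply HK1, Z2. lra. }
    set (k := sqrt C0).
    assert (kpos : 0 < k) by (apply sqrt_lt_R0; exact C0pos).
    assert (kk : k * k = C0) by (apply sqrt_sqrt; lra).
    assert (kap : forall t, in_I lo hi t -> kappa t = k).
    { intros t Ht. unfold kappa. rewrite (proj1 (KK t Ht)). reflexivity. }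
    split.
    { rewrite kap by exact Hs. simpl. rewrite Rmult_1_r. exact kk. }
    exists (vscal (/ k) (vsub (gamma3 s) (gamma1 s))). split.
    { apply (is_derive_ext_loc (fun t => vscal (/ k) (vsub (gamma2 t) (gamma t)))).
      - apply (filter_imp (in_I lo hi)); [|apply locI, Hs].
        intros t Ht. unfold N. rewrite (kap t Ht). reflexivity.
      - apply der_vsv; [apply Hd3, Hs | apply Hd1, Hs]. }
    assert (DK2 : is_derive (fun t => vscal q (cross (gamma t) (Vfield a (gamma t)) (gamma1 t))) s
       (vscal q (vadd (vadd (cross (gamma1 s) (Vfield a (gamma s)) (gamma1 s))
          (cross (gamma s) (vadd (vscal (lor a (gamma1 s)) (gamma s)) (vscal (lor a (gamma s)) (gamma1 s))) (gamma1 s)))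
          (cross (gamma s) (Vfield a (gamma s)) (gamma2 s))))).
    { destruct (der_c _ _ _ (Hd1 s Hs)) as (A1&A2&A3&A4).
      destruct (der_c _ _ _ (Hd2 s Hs)) as (B1&B2&B3&B4).
      pose proof (der_cross a q (fun t => Defs.c1 (gamma t)) (fun t => Defs.c2 (gamma t))
        (fun t => Defs.c3 (gamma t)) (fun t => Defs.c4 (gamma t)) (fun t => Defs.c1 (gamma1 t))
        (fun t => Defs.c2 (gamma1 t)) (fun t => Defs.c3 (gamma1 t)) (fun t => Defs.c4 (gamma1 t))
        _ _ _ _ s A1 A2 A3 A4 B1 B2 B3 B4) as E.
      cbv zeta beta in E. rewrite <- !eta4 in E.
      eapply is_derive_ext; [|exact E]. intros t; simpl. rewrite <- !eta4. reflexivity. }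
    assert (DK1 : is_derive (fun t => vsub (gamma2 t) (gamma t)) s (vsub (gamma3 s) (gamma1 s))).
    { pose proof (der_vsv gamma2 gamma 1 s _ _ (Hd3 s Hs) (Hd1 s Hs)) as E.
      rewrite vscal1 in E. eapply is_derive_ext; [|exact E]. intros t; apply vscal1. }
    assert (DK3 : is_derive (fun t => vsub (gamma2 t) (gamma t)) s
       (vscal q (vadd (vadd (cross (gamma1 s) (Vfield a (gamma s)) (gamma1 s))
          (cross (gamma s) (vadd (vscal (lor a (gamma1 s)) (gamma s)) (vscal (lor a (gamma s)) (gamma1 s))) (gamma1 s)))
          (cross (gamma s) (Vfield a (gamma s)) (gamma2 s))))).
    { apply (is_derive_ext_loc (fun t => vscal q (cross (gamma t) (Vfield a (gamma t)) (gamma1 t)))); [|exact DK2].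
      apply (filter_imp (in_I lo hi)); [|apply locI, Hs].
      intros t Ht. symmetry. apply Htraj, Ht. }
    pose proof (der_uniq4 _ _ _ _ DK1 DK3) as Dval.
    rewrite cross_rep2, cross_pp, <- (cross_sub (gamma s) (Vfield a (gamma s)) (gamma2 s)),
      (Htraj s Hs), cross_scal, Dsimp in Dval.
    clear DK1 DK2 DK3.
    unfold B, N. rewrite (kap s Hs), (Htraj s Hs), Dval, !vscal_scal, !cross_scal.
    rewrite proj_tan by (rewrite lor_scal_l, cross_tangent; ring).
    pose proof (Hpp s Hs) as P1. pose proof (Hunit s Hs) as P2. pose proof (HpT s Hs) as P3.
    assert (P4 : lor (gamma1 s) (gamma s) = 0) by (rewrite lor_sym; exact P3).
    assert (Vp : lor (Vfield a (gamma s)) (gamma s) = 0) by (rewrite lor_Vp, P1; ring).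
    assert (pV : lor (gamma s) (Vfield a (gamma s)) = 0) by (rewrite lor_sym; exact Vp).
    assert (TV : lor (gamma1 s) (Vfield a (gamma s)) = lor (Vfield a (gamma s)) (gamma1 s)) by apply lor_sym.
    assert (Hphi : lor (Vfield a (gamma s)) (gamma1 s) = a1 * sinh s + a2 * cosh s).
    { rewrite lor_VT, P3, lor_sym. destruct (Hsol s Hs) as [_ F2]. unfold f1 in F2. rewrite <- F2. ring. }
    pose proof (proj1 (KK s Hs)) as KKs.
    rewrite (Htraj s Hs), lor_ss, cg, TV, P1, P2, P3, P4, Vp, pV in KKs.
    rewrite !cc, TV, P1, P2, P3, P4, Vp, pV, <- Hphi.
    rewrite <- kk in KKs.
    set (phi := lor (Vfield a (gamma s)) (gamma1 s)) in *.
    assert (HVV : lor (Vfield a (gamma s)) (Vfield a (gamma s)) = k*k/(q*q) + phi*phi).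
    { rewrite <- KKs. field. exact Hq. }
    rewrite HVV.
    assert (kne : k <> 0) by lra.
    clearbody phi. clear - kne Hq.
    generalize (Vfield a (gamma s)) (gamma1 s) (gamma s). intros V T p.
    d4. unf. repeat (apply injective_projections; simpl); field; auto.
Qed.
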